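(* For every $k\ge1$, $\mathrm{ABD}(k\text{-CNF}^+)\le^{\mathrm{CV}}\mathrm{SimpleSAT}^k$. Moreover, the reduction maps an instance $(\mathrm{KB},H,M)$ to a $\mathrm{SimpleSAT}^k$ instance whose variables all belong to $H$.
   Context: $k\text{-CNF}^+$ is the constraint language of positive clauses of arity $k$ (so $\Gamma$-formulas are conjunctions of clauses $(x_1\vee\dots\vee x_k)$ with not necessarily distinct variables). An instance of $\mathrm{ABD}(\Gamma)$ is $(\mathrm{KB},H,M)$, $\mathrm{KB}$ a $\Gamma$-formula, $H,M$ sets of variables; it asks whether there is $E\subseteq H\cup\{\neg x:x\in H\}$ with $\mathrm{KB}\wedge E$ satisfiable and $\mathrm{KB}\wedge E\models m$ for all $m\in M$. $\mathrm{SimpleSAT}^p$ is satisfiability of formulas $\bigwedge_i C_i\wedge\bigwedge_j(\bigvee_\ell T_{j,\ell})$, with each $C_i$ a clause of at most $p$ positive literals and each $T_{j,\ell}$ a conjunction of negative literals. For problems $A,B$ whose instances have variable sets, a CV-reduction $A\le^{\mathrm{CV}}B$ is a polynomial-time map $f$ such that $I$ is a yes-instance of $A$ iff $f(I)$ is a yes-instance of $B$ and $|\mathrm{var}(f(I))|\le|\mathrm{var}(I)|+O(1)$. *)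

(* Defs.v *)
From mathcomp Require Import all_boot.
Set Implicit Arguments. Unset Strict Implicit. Unset Printing Implicit Defensive.

Definition assignment := nat -> bool.

(* A positive clause (x_1 \/ ... \/ x_n) is the list of its variables
   (repetitions allowed); a positive CNF is a list of positive clauses. *)
Definition pclause := seq nat.
Definition pcnf := seq pclause.

Definition kCNFpos (k : nat) (F : pcnf) : bool := all (fun C => size C == k) F.

Definition sat_pclause (s : assignment) (C : pclause) : bool := has s C.
Definition sat_pcnf (s : assignment) (F : pcnf) : bool := all (sat_pclause s) F.

Record abd_instance := ABDInst {
  KB : pcnf;
  Hyps : seq nat;
  Mans : seq nat
}.

(* a literal (x, b) is x if b = true and ~x if b = false *)
Definition literal := (nat * bool)%type.
Definition lit_holds (s : assignment) (l : literal) : bool := s l.1 == l.2.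

Definition ABD (I : abd_instance) : Prop :=
  exists E : seq literal,
    (forall l, l \in E -> l.1 \in Hyps I) /\
    (exists s : assignment, sat_pcnf s (KB I) /\ all (lit_holds s) E) /\
    (forall m, m \in Mans I ->
       forall s : assignment, sat_pcnf s (KB I) -> all (lit_holds s) E -> s m).

Definition vars_abd (I : abd_instance) : seq nat :=
  undup (flatten (KB I) ++ Hyps I ++ Mans I).

(* A formula  /\_i C_i  /\  /\_j ( \/_l T_{j,l} ):
   - sclauses: the positive clauses C_i (lists of variables);
   - sdisjs: each disjunction is a list of terms, each term T_{j,l} is the
     conjunction of the negations of the listed variables. *)
Record simple_formula := SimpleF {
  sclauses : seq (seq nat);
  sdisjs : seq (seq (seq nat))
}.

Definition is_simple (p : nat) (F : simple_formula) : bool :=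
  all (fun C => size C <= p) (sclauses F).

Definition sat_term (s : assignment) (T : seq nat) : bool := all (fun x => ~~ s x) T.

Definition sat_simple (s : assignment) (F : simple_formula) : bool :=
  all (has s) (sclauses F) && all (has (sat_term s)) (sdisjs F).

Definition SimpleSAT (p : nat) (F : simple_formula) : Prop :=
  is_simple p F /\ exists s : assignment, sat_simple s F.

Definition vars_simple (F : simple_formula) : seq nat :=
  undup (flatten (sclauses F) ++ flatten (flatten (sdisjs F))).

Definition reduce (I : abd_instance) : simple_formula :=
  let H := Hyps I in
  SimpleF
    ([seq C <- KB I | all (fun x => x \in H) C] ++
     [seq [:: m] | m <- Mans I & m \in H])
    [seq [seq [seq x <- C | x != m] | C <- KB I &
            (m \in C) && all (fun x => (x == m) || (x \in H)) C]
       | m <- Mans I & m \notin H].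

(* Main.v *)
Require Import Defs.
From mathcomp Require Import all_boot.

Lemma vars_sub (I : abd_instance) : {subset vars_simple (reduce I) <= Hyps I}.
Proof.
move=> x; rewrite /vars_simple mem_undup mem_cat => /orP[].
- case/flattenP=> C; rewrite /= mem_cat => /orP[].
  + by rewrite mem_filter => /andP[/allP hC _] /hC.
  + case/mapP=> m; rewrite mem_filter => /andP[hm _] ->.
    by rewrite inE => /eqP ->.
- case/flattenP=> T /flattenP [D hD hT] hx.
  case/mapP: hD => m hm hD; subst D.
  case/mapP: hT => C hC hT; subst T.
  move: hx; rewrite mem_filter => /andP[xm xC].
  move: hC; rewrite mem_filter => /andP[/andP[_ /allP hall] _].
  by have := hall x xC; rewrite (negbTE xm).
Qed.

Theorem theorem21 (k : nat) (hk : 1 <= k) (I : abd_instance) :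
  kCNFpos k (KB I) ->
  is_simple k (reduce I) /\
  (ABD I <-> SimpleSAT k (reduce I)) /\
  size (vars_simple (reduce I)) <= size (vars_abd I) /\
  {subset vars_simple (reduce I) <= Hyps I}.
Proof.
move=> hK.
have hsimp : is_simple k (reduce I).
  apply/allP => C; rewrite /= mem_cat => /orP[].
  - by rewrite mem_filter => /andP[_ hC]; move/allP: hK => /(_ C hC) /eqP ->.
  - by case/mapP=> m _ ->.
split; first exact hsimp.
split; last first.
  split; last exact: vars_sub.
  apply: uniq_leq_size; first exact: undup_uniq.
  move=> x /vars_sub hx; rewrite /vars_abd mem_undup !mem_cat hx.
  by rewrite orbT.
split.
- case=> E [hEH [[s0 [hs0 hE0]] hent]].
  split=> //; exists s0; apply/andP; split.
  + apply/allP => C; rewrite mem_cat => /orP[].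
    * by rewrite mem_filter => /andP[_ hC]; move/allP: hs0 => /(_ C hC).
    * case/mapP=> m; rewrite mem_filter => /andP[_ hm] ->.
      by rewrite /= (hent m hm s0 hs0 hE0).
  + apply/allP => D /mapP [m]; rewrite mem_filter => /andP[hmH hm] ->.
    pose s' := fun x => if x == m then false else if x \in Hyps I then s0 x else true.
    have hE' : all (lit_holds s') E.
      apply/allP => l hl; move/allP: hE0 => /(_ l hl).
      have ne : l.1 != m by apply/eqP => e; move: hmH; rewrite -e (hEH l hl).
      by rewrite /lit_holds /s' (negbTE ne) (hEH l hl).
    have : ~~ sat_pcnf s' (KB I).
      apply/negP => hs'; have := hent m hm s' hs' hE'.
      by rewrite /s' eqxx.
    case/allPn => C hC hnC.
    have hall : all (fun x => (x == m) || (x \in Hyps I)) C.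
      apply/allP => x xC; apply/negPn/negP; rewrite negb_or => /andP[xm xH].
      by apply: (negP hnC); apply/hasP; exists x => //; rewrite /s' (negbTE xm) (negbTE xH).
    have hmC : m \in C.
      apply/negPn/negP => hmC; apply: (negP hnC).
      move/allP: hs0 => /(_ C hC) /hasP [x xC sx]; apply/hasP; exists x => //.
      move/allP: hall => /(_ x xC) /orP[/eqP e|xH]; first by rewrite -e xC in hmC.
      by rewrite /s' xH; case: eqP => // e; rewrite -e xC in hmC.
    apply/hasP; exists [seq x <- C | x != m].
      by apply/mapP; exists C => //; rewrite mem_filter hC hmC hall.
    apply/allP => x; rewrite mem_filter => /andP[xm xC].
    move/allP: hall => /(_ x xC); rewrite (negbTE xm) /= => xH.
    apply/negP => sx; apply: (negP hnC); apply/hasP; exists x => //.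
    by rewrite /s' (negbTE xm) xH.
- case=> _ [s /andP [hcl hdj]].
  exists [seq (x, s x) | x <- Hyps I]; split; last split.
  + by move=> l /mapP [x hx ->].
  + exists (fun x => if x \in Hyps I then s x else true); split.
    * apply/allP => C hC.
      case hCH: (all (fun x => x \in Hyps I) C).
      - move/allP: hcl => /(_ C); rewrite mem_cat mem_filter hC hCH => /(_ isT).
        case/hasP => x xC sx; apply/hasP; exists x => //.
        by move/allP: hCH => /(_ x xC) ->.
      - case/allPn: (negbT hCH) => x xC xH; apply/hasP; exists x => //.
        by rewrite (negbTE xH).
    * by apply/allP => l /mapP [x hx ->]; rewrite /lit_holds /= hx.
  + move=> m hm t ht htE.
    have agree : forall x, x \in Hyps I -> t x = s x.
      move=> x hx; move/allP: htE => /(_ (x, s x)).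
      by rewrite /lit_holds /= => /(_ (map_f _ hx)) /eqP.
    case hmH: (m \in Hyps I).
    * rewrite agree //; move/allP: hcl => /(_ [:: m]).
      rewrite mem_cat; set b := (_ \in map _ _).
      have -> : b by apply/mapP; exists m => //; rewrite mem_filter hmH.
      by rewrite orbT /= orbF => /(_ isT).
    * move/allP: hdj => /(_ _ (map_f _ _)).
      have hm' : m \in [seq m <- Mans I | m \notin Hyps I] by rewrite mem_filter hmH hm.
      move=> /(_ m hm') /hasP [T /mapP [C hC ->]] hT.
      move: hC; rewrite mem_filter => /andP[/andP[hmC /allP hall] hC].
      move/allP: ht => /(_ C hC) /hasP [x xC tx].
      case: (eqVneq x m) => [<- //| xm].
      have xH : x \in Hyps I by have := hall x xC; rewrite (negbTE xm).
      move/allP: hT => /(_ x); rewrite mem_filter xm xC => /(_ isT).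
      by rewrite -(agree x xH) tx.
Qed.
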